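(* Let $\{B_j\}$ and $\{C_j\}$ be finite lists of operators on the fermionic Fock space on $n$ spin orbitals with the same cardinality, where each $B_j$ maps the $\eta$-electron subspace into the $\xi$-electron subspace and each $C_j$ is number-preserving. Then $$\max_{|\psi_\eta\rangle}\langle\psi_\eta|\sum_{j}B_j^\dagger C_j^\dagger C_jB_j|\psi_\eta\rangle\le\max_{|\psi_\eta\rangle}\langle\psi_\eta|\sum_{j}B_j^\dagger B_j|\psi_\eta\rangle\cdot\max_{k,\,|\phi_\xi\rangle}\langle\phi_\xi|C_k^\dagger C_k|\phi_\xi\rangle,$$ where $|\psi_\eta\rangle$ ranges over $\eta$-electron states and $|\phi_\xi\rangle$ over $\xi$-electron states. In terms of the fermionic seminorm, $$\Big\|\sum_{j}B_j^\dagger C_j^\dagger C_jB_j\Big\|_{\eta}\le\Big\|\sum_{j}B_j^\dagger B_j\Big\|_{\eta}\max_k\|C_k^\dagger C_k\|_{\xi}.$$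
   Context: Fermionic Fock space on $n$ spin orbitals: the $2^n$-dimensional Hilbert space with orthonormal basis $|c_0,\dots,c_{n-1}\rangle$, $c_j\in\{0,1\}$, with creation operators $A_j^\dagger|\dots,0_j,\dots\rangle=(-1)^{\sum_{k<j}c_k}|\dots,1_j,\dots\rangle$, $A_j^\dagger|\dots,1_j,\dots\rangle=0$, annihilation operators $A_j=(A_j^\dagger)^\dagger$, $N=\sum_jA_j^\dagger A_j$. An operator is number-preserving if it commutes with $N$. The $\eta$-electron subspace is the span of basis vectors with $\sum_jc_j=\eta$; $\eta$-electron states are unit vectors in it. For an operator $Y$, $\|Y\|_\eta=\max_{|\psi_\eta\rangle,|\phi_\eta\rangle}|\langle\phi_\eta|Y|\psi_\eta\rangle|$ over $\eta$-electron states. *)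

(* Defs.v *)
From HB Require Import structures.
From mathcomp Require Import all_boot all_order all_algebra.
From mathcomp Require Import reals complex.
Set Implicit Arguments. Unset Strict Implicit. Unset Printing Implicit Defensive.
Import Order.TTheory GRing.Theory Num.Theory.
Local Open Scope ring_scope.

(* Basis vector |c_0,...,c_{n-1}> of the Fock space on n spin orbitals is
   indexed by i : 'I_(2^n) with i = \sum_k c_k 2^k, i.e. c_k = bit k of i. *)
Definition occ (n : nat) (i : 'I_(2 ^ n)) (k : nat) : bool := odd (i %/ 2 ^ k).

Definition nelec (n : nat) (i : 'I_(2 ^ n)) : nat := (\sum_(k < n) occ i k)%N.

Definition adj (R : rcfType) (p q : nat) (A : 'M[R[i]]_(p, q)) : 'M[R[i]]_(q, p) :=
  (map_mx (@conjc R) A)^T.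

(* creation operator A_j^dagger:
   A_j^dag |..,0_j,..> = (-1)^(\sum_{k<j} c_k) |..,1_j,..>,  A_j^dag |..,1_j,..> = 0 *)
Definition creation (R : rcfType) (n : nat) (j : 'I_n) : 'M[R[i]]_(2 ^ n) :=
  \matrix_(a, b)
    if ~~ occ b j && (nat_of_ord a == b + 2 ^ j)%N
    then (-1) ^+ (\sum_(k < n | (k < j)%N) occ b k)%N else 0.

Definition annihilation (R : rcfType) (n : nat) (j : 'I_n) : 'M[R[i]]_(2 ^ n) :=
  adj (creation R j).

Definition numop (R : rcfType) (n : nat) : 'M[R[i]]_(2 ^ n) :=
  \sum_(j < n) (creation R j *m annihilation R j).

Definition number_preserving (R : rcfType) (n : nat) (Y : 'M[R[i]]_(2 ^ n)) : Prop :=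
  Y *m numop R n = numop R n *m Y.

Definition in_sector (R : rcfType) (n eta : nat) (v : 'cV[R[i]]_(2 ^ n)) : Prop :=
  forall i : 'I_(2 ^ n), nelec i != eta -> v i 0 = 0.

Definition state (R : rcfType) (n eta : nat) (v : 'cV[R[i]]_(2 ^ n)) : Prop :=
  in_sector eta v /\ adj v *m v = 1%:M.

(* expectation value <v|X|v> (real part; it is real for the Hermitian X used) *)
Definition expect (R : rcfType) (n : nat) (v : 'cV[R[i]]_(2 ^ n))
  (X : 'M[R[i]]_(2 ^ n)) : R := complex.Re ((adj v *m X *m v) 0 0).

Definition is_max (R : rcfType) (S : R -> Prop) (m : R) : Prop :=
  S m /\ forall x, S x -> x <= m.

(* Main.v *)
Require Import Defs.
From HB Require Import structures.
From mathcomp Require Import all_boot all_order all_algebra.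
From mathcomp Require Import reals complex ring.
Import Order.TTheory GRing.Theory Num.Theory.
Local Open Scope ring_scope.
Local Open Scope complex_scope.

Lemma odd_add2 (c j : nat) : odd ((c + 2 ^ j) %/ 2 ^ j)%N = ~~ odd (c %/ 2 ^ j)%N.
Proof.
rewrite divnDr // divnn expn_gt0 /= addn1 /=. by case: odd.
Qed.

Lemma occ_ge (a j : nat) : odd (a %/ 2 ^ j)%N -> (2 ^ j <= a)%N.
Proof.
move=> H; rewrite -(@divn_gt0 (2 ^ j) a) ?expn_gt0 //. by case: (a %/ 2 ^ j)%N H.
Qed.

Lemma sign_conj (R : rcfType) (k : nat) : ((-1) ^+ k : R[i]) * ((-1) ^+ k)^*%C = 1.
Proof. by rewrite rmorphXn rmorphN1 -exprMn mulrNN mulr1 expr1n. Qed.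

Lemma numopE (R : rcfType) (n : nat) (a b : 'I_(2 ^ n)) :
  numop R n a b = ((a == b)%:R * (nelec a)%:R).
Proof.
rewrite /numop summxE /nelec natr_sum mulr_sumr; apply: eq_bigr => j _.
rewrite mxE.
have E : forall c : 'I_(2 ^ n), creation R j a c * annihilation R j c b =
   ((c + 2 ^ j == a)%N && ~~ occ c j && (a == b))%:R.
  move=> c; rewrite /annihilation /adj !mxE /occ.
  case: (boolP (odd (c %/ 2 ^ j)%N)) => Hc /=; first by rewrite mul0r andbF.
  case: (eqVneq (nat_of_ord a) (c + 2 ^ j)%N) => Ha /=; last first.
    by rewrite mul0r.
  case: (eqVneq a b) => Hab /=.
    by rewrite -Hab Ha eqxx sign_conj.
  have -> : (nat_of_ord b == c + 2 ^ j)%N = false.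
    apply/negP => /eqP Hb; move/negP: Hab; apply; apply/eqP; apply: val_inj => /=; by rewrite Ha Hb.
  by rewrite conjc0 mulr0.
rewrite (eq_bigr _ (fun c _ => E c)).
case: (eqVneq a b) => Hab; last first.
  by rewrite mul0r big1 // => c _; rewrite andbF.
rewrite mul1r.
case: (boolP (occ a j)) => Ho.
  have Hlt : (a - 2 ^ j < 2 ^ n)%N by rewrite (leq_ltn_trans (leq_subr _ _)).
  rewrite (bigD1 (Ordinal Hlt)) //= big1 ?addr0.
    rewrite subnK ?eqxx ?andbT; last exact: occ_ge.
    have : odd (((a - 2 ^ j) + 2 ^ j) %/ 2 ^ j)%N by rewrite subnK //; exact: occ_ge.
    by rewrite odd_add2 /occ => ->.
  move=> c Hc; rewrite andbT.
  case: (eqVneq (c + 2 ^ j)%N a) => // Hca; exfalso; move/eqP: Hc; apply; apply: val_inj => /=.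
  by rewrite -Hca addnK.
rewrite big1 // => c _; rewrite andbT.
case: (eqVneq (c + 2 ^ j)%N a) => //= Hca.
move: Ho; rewrite /occ -Hca odd_add2. by case: odd.
Qed.

Set Implicit Arguments. Unset Strict Implicit.
Section Q.
Variable R : rcfType.
Variable n : nat.
Local Notation N := (2 ^ n)%N.
Implicit Types w : 'cV[R[i]]_N.

Definition q w : R[i] := (adj w *m w) 0 0.

Lemma qE w : q w = \sum_i (w i 0)^*%C * w i 0.
Proof. by rewrite /q !mxE; apply: eq_bigr => i _; rewrite !mxE. Qed.

Lemma q_ge0 w : 0 <= q w.
Proof. rewrite qE; apply: sumr_ge0 => i _; rewrite mulrC; exact: mulcJ_ge0. Qed.

Lemma q_real w : (complex.Re (q w))%:C = q w.
Proof. exact: RRe_real (ger0_real (q_ge0 w)). Qed.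

Lemma Re_q_ge0 w : 0 <= complex.Re (q w).
Proof. by rewrite -ler0c q_real q_ge0. Qed.

Lemma q_eq0 w : complex.Re (q w) = 0 -> w = 0.
Proof.
move=> H; have Hq : q w = 0 by rewrite -q_real H.
apply/matrixP => a b; rewrite ord1 mxE.
have H0 : forall i : 'I_N, true -> 0 <= (w i 0)^*%C * w i 0.
  move=> i _; rewrite mulrC; exact: mulcJ_ge0.
move: Hq; rewrite qE => /(psumr_eq0P H0) /(_ a isT) /eqP.
by rewrite mulf_eq0 conjc_eq0 orbb => /eqP.
Qed.

Lemma qZ s w : q (s%:C *: w) = (s ^+ 2)%:C * q w.
Proof.
rewrite !qE mulr_sumr; apply: eq_bigr => i _; rewrite mxE.
case: (w i 0) => a b; simpc; congr (_ +i* _); ring.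
Qed.

Lemma adj_mul (p r : nat) (X : 'M[R[i]]_(p, N)) (Y : 'M[R[i]]_(N, r)) :
  adj (X *m Y) = adj Y *m adj X.
Proof. by rewrite /adj map_mxM trmx_mul. Qed.

Lemma expect_sq psi (X : 'M[R[i]]_N) :
  expect psi (adj X *m X) = complex.Re (q (X *m psi)).
Proof. by rewrite /expect /q adj_mul !mulmxA. Qed.

Lemma expect_sum (m : nat) psi (F : 'I_m -> 'M[R[i]]_N) :
  expect psi (\sum_j F j) = \sum_j expect psi (F j).
Proof.
rewrite /expect mulmx_sumr mulmx_suml summxE.
exact: raddf_sum.
Qed.
End Q.

Lemma numop_diag (R : rcfType) (n : nat) :
  numop R n = diag_mx (\row_i ((nelec i)%:R : R[i])).
Proof.
apply/matrixP => a b; rewrite numopE !mxE.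
by case: eqP => [->|]; rewrite ?mulr1n ?mul1r ?mul0r ?mulr0n.
Qed.

Lemma np_sector (R : rcfType) (n xi : nat) (Cm : 'M[R[i]]_(2 ^ n))
  (w : 'cV[R[i]]_(2 ^ n)) :
  number_preserving Cm -> in_sector xi w -> in_sector xi (Cm *m w).
Proof.
move=> H Hw a Ha; rewrite mxE big1 // => b _.
case: (eqVneq (nelec b) xi) => Hb; last by rewrite Hw ?mulr0.
have : (Cm *m numop R n) a b = (numop R n *m Cm) a b by rewrite H.
rewrite numop_diag mul_mx_diag mul_diag_mx !mxE => /eqP.
rewrite mulrC -subr_eq0 -mulrBl mulf_eq0 subr_eq0 eqr_nat.
rewrite Hb eq_sym (negbTE Ha) /= => /eqP ->; by rewrite mul0r.
Qed.

Lemma scale_sector (R : rcfType) (n xi : nat) (c : R[i]) (w : 'cV[R[i]]_(2 ^ n)) :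
  in_sector xi w -> in_sector xi (c *: w).
Proof. by move=> Hw a Ha; rewrite mxE Hw ?mulr0. Qed.

Lemma key (R : rcfType) (n xi m : nat) (C : 'I_m -> 'M[R[i]]_(2 ^ n)) (M3 : R)
  (w : 'cV[R[i]]_(2 ^ n)) (k : 'I_m) :
  number_preserving (C k) -> in_sector xi w ->
  (forall x, (exists (k : 'I_m) phi, state xi phi /\
            x = expect phi (adj (C k) *m C k)) -> x <= M3) ->
  complex.Re (q (C k *m w)) <= M3 * complex.Re (q w).
Proof.
move=> Hnp Hw HM.
have [H0|Hpos] := eqVneq (complex.Re (q w)) 0.
  have Ew := q_eq0 H0; move: H0; rewrite Ew mulmx0 => ->; by rewrite mulr0.
have Hgt : 0 < complex.Re (q w) by rewrite lt_def Hpos Re_q_ge0.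
set r := Num.sqrt (complex.Re (q w)).
have Hr : 0 < r by rewrite sqrtr_gt0.
have Hr2 : r ^+ 2 = complex.Re (q w) by rewrite sqr_sqrtr ?Re_q_ge0.
set u := (r^-1)%:C *: w.
have Hu : state xi u.
  split; first exact: scale_sector.
  apply/matrixP => a b; rewrite !ord1 -[(adj u *m u) 0 0]/(q u) qZ -q_real.
  rewrite mxE /= -rmorphM /= exprVn Hr2 mulVf //.
have := HM _ (ex_intro _ k (ex_intro _ u (conj Hu erefl))).
rewrite expect_sq -scalemxAr qZ -q_real -rmorphM /= exprVn Hr2.
rewrite -(ler_pM2l Hgt) mulrA mulfV // mul1r => H; by rewrite mulrC.
Qed.
Local Close Scope complex_scope.

Theorem lemma3 (R : realType) (n eta xi m : nat)
  (B C : 'I_m -> 'M[R[i]]_(2 ^ n)) :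
  (forall (j : 'I_m) (v : 'cV[R[i]]_(2 ^ n)),
      in_sector eta v -> in_sector xi (B j *m v)) ->
  (forall j : 'I_m, number_preserving (C j)) ->
  forall M1 M2 M3 : R,
  is_max (fun x => exists psi, state eta psi /\
            x = expect psi (\sum_(j < m) (adj (B j) *m adj (C j) *m C j *m B j))) M1 ->
  is_max (fun x => exists psi, state eta psi /\
            x = expect psi (\sum_(j < m) (adj (B j) *m B j))) M2 ->
  is_max (fun x => exists (k : 'I_m) phi, state xi phi /\
            x = expect phi (adj (C k) *m C k)) M3 ->
  M1 <= M2 * M3.
Proof.
move=> HB HC M1 M2 M3 [[psi [Hpsi ->]] _] [_ H2] [[k0 [phi [Hphi EM3]]] H3].
have M3ge0 : 0 <= M3 by rewrite EM3 expect_sq Re_q_ge0.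
rewrite expect_sum.
apply: (@le_trans _ _ (\sum_j M3 * complex.Re (q (B j *m psi)))).
  apply: ler_sum => j _.
  have -> : adj (B j) *m adj (C j) *m C j *m B j = adj (C j *m B j) *m (C j *m B j).
    by rewrite adj_mul !mulmxA.
  rewrite expect_sq -mulmxA; apply: key; [exact: HC | exact: HB (proj1 Hpsi) | exact: H3].
rewrite -mulr_sumr mulrC; apply: ler_wpM2r => //; apply: H2; exists psi; split => //.
by rewrite expect_sum; apply: eq_bigr => j _; rewrite expect_sq.
Qed.
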